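(* There is an absolute constant $C>0$ such that the following holds. Let $n,d,k\ge 1$, let $\phi:\mathbb{R}\to\mathbb{R}$ be $L$-Lipschitz with $\phi(0)=0$, let $b>0$, and let $x_1,\dots,x_n,x'_1,\dots,x'_n\in\mathbb{R}^d$ satisfy $\|x_i\|_2\le b$ and $\|x'_i\|_2\le b$ for all $i$. For $a,a'>0$ let $\mathcal{J}^k_{a,a'}=\{A\in\mathbb{R}^{d\times k} : \|A\|_{2,1}\le a,\ \|A\|_{op}\le a'\}$. Then $$\widehat{\mathfrak{R}}\big(\mathcal{F}_k(\mathcal{J}^k_{a,a'})\big)\le C\left(\frac1n+\frac{a\,a'\,b^2L^2}{k\sqrt n}\sqrt{\log(2dk)}\,\log\Big(2+\frac{n\,b^2a'^2L^2}{k}\Big)\right).$$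
   Context: For $A\in\mathbb{R}^{d\times k}$ with columns $A_{\cdot 1},\dots,A_{\cdot k}$: $\|A\|_{2,1}=\sum_{j=1}^k\|A_{\cdot j}\|_2$, $\|A\|_{2,\infty}=\max_{j\le k}\|A_{\cdot j}\|_2$, and $\|A\|_{op}$ is the spectral norm. For $u,v\in\mathbb{R}^k$, $\zeta_k(u,v)=\frac1k\|u-v\|_2^2$. The function $\phi$ is applied coordinatewise to vectors. Given fixed points $x_1,\dots,x_n,x'_1,\dots,x'_n\in\mathbb{R}^d$ and a set $\mathcal{G}\subset\mathbb{R}^{d\times k}$, define $\mathcal{F}_k(\mathcal{G})=\{(\zeta_k(\phi(A^tx_i),\phi(A^tx'_i)))_{i=1}^n : A\in\mathcal{G}\}\subset\mathbb{R}^n$. For a set $\mathcal{F}\subset\mathbb{R}^n$, the empirical Rademacher complexity is $\widehat{\mathfrak{R}}(\mathcal{F})=\frac1n\mathbb{E}_\varepsilon\sup_{f\in\mathcal{F}}\sum_{i=1}^n\varepsilon_if_i$, where $\varepsilon_1,\dots,\varepsilon_n$ are i.i.d. uniform on $\{-1,1\}$. *)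

(* Defs.v *)
From HB Require Import structures.
From mathcomp Require Import all_boot all_order all_algebra.
From mathcomp Require Import all_classical all_reals.
From mathcomp Require Import Rstruct exp.
From Stdlib Require Import Rdefinitions.
Set Implicit Arguments. Unset Strict Implicit. Unset Printing Implicit Defensive.
Import Order.TTheory GRing.Theory Num.Theory.
Local Open Scope ring_scope.
Local Open Scope classical_set_scope.

Notation RR := Rdefinitions.R.

Definition norm2 (m : nat) (v : 'cV[RR]_m) : RR :=
  Num.sqrt (\sum_(i < m) (v i 0) ^+ 2).

Definition norm21 (d k : nat) (A : 'M[RR]_(d, k)) : RR :=
  \sum_(j < k) norm2 (col j A).

Definition opnorm (d k : nat) (A : 'M[RR]_(d, k)) : RR :=
  sup [set norm2 (A *m v) | v in [set v : 'cV[RR]_k | norm2 v <= 1]].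

Definition zeta (k : nat) (u v : 'cV[RR]_k) : RR :=
  k%:R^-1 * (norm2 (u - v)) ^+ 2.

(* F_k(G) as a set of vectors in R^n (finite functions 'I_n -> R) *)
Definition Fk (n d k : nat) (phi : RR -> RR) (x x' : 'I_n -> 'cV[RR]_d)
  (G : set 'M[RR]_(d, k)) : set ('I_n -> RR) :=
  [set f | exists2 A, G A &
     f = fun i => zeta (map_mx phi (A^T *m x i)) (map_mx phi (A^T *m x' i))].

(* empirical Rademacher complexity: expectation over the uniform measure on
   {-1,1}^n, written as the average over all 2^n sign vectors *)
Definition sgn (b : bool) : RR := if b then 1 else -1.

Definition rademacher (n : nat) (F : set ('I_n -> RR)) : RR :=
  n%:R^-1 * ((2 ^+ n)^-1 *
    \sum_(eps : {ffun 'I_n -> bool})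
       sup [set (\sum_(i < n) sgn (eps i) * f i) | f in F]).

Definition Jset (d k : nat) (a a' : RR) : set 'M[RR]_(d, k) :=
  [set A | norm21 A <= a /\ opnorm A <= a'].

(* Main.v *)
Require Import Defs.
From HB Require Import structures.
From mathcomp Require Import all_boot all_order all_algebra.
From mathcomp Require Import all_classical all_reals.
From mathcomp Require Import Rstruct exp.
From mathcomp Require Import ring lra.
Import Order.TTheory GRing.Theory Num.Theory.
Local Open Scope ring_scope.
Local Open Scope classical_set_scope.
Set Implicit Arguments. Unset Strict Implicit. Unset Printing Implicit Defensive.
Lemma CS2 (m : nat) (u v : 'I_m -> RR) :
  (\sum_i u i * v i) ^+ 2 <= (\sum_i u i ^+ 2) * (\sum_i v i ^+ 2).
Proof.
have H : 0 <= \sum_i \sum_j (u i * v j - u j * v i) ^+ 2.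
  by apply: sumr_ge0 => i _; apply: sumr_ge0 => j _; exact: sqr_ge0.
have E1 : \sum_i \sum_j (u i * v j - u j * v i) ^+ 2 =
   \sum_i \sum_j (u i ^+ 2 * v j ^+ 2 + u j ^+ 2 * v i ^+ 2 - 2 * ((u i * v i) * (u j * v j))).
  by apply: eq_bigr => i _; apply: eq_bigr => j _; ring.
have E2 : \sum_i \sum_j (u i ^+ 2 * v j ^+ 2) = (\sum_i u i ^+ 2) * (\sum_i v i ^+ 2).
  by rewrite mulr_suml; apply: eq_bigr => i _; rewrite mulr_sumr.
have E3 : \sum_i \sum_j (u j ^+ 2 * v i ^+ 2) = (\sum_i u i ^+ 2) * (\sum_i v i ^+ 2).
  by rewrite exchange_big.
have E4 : \sum_i \sum_j ((u i * v i) * (u j * v j)) = (\sum_i u i * v i) ^+ 2.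
  by rewrite expr2 mulr_suml; apply: eq_bigr => i _; rewrite mulr_sumr.
have E5 : \sum_i \sum_j (u i ^+ 2 * v j ^+ 2 + u j ^+ 2 * v i ^+ 2 - 2 * ((u i * v i) * (u j * v j)))
  = \sum_i \sum_j (u i ^+ 2 * v j ^+ 2) + \sum_i \sum_j (u j ^+ 2 * v i ^+ 2)
    - 2 * \sum_i \sum_j ((u i * v i) * (u j * v j)).
  rewrite mulr_sumr -big_split /= -sumrB; apply: eq_bigr => i _.
  by rewrite mulr_sumr -big_split /= -sumrB.
rewrite E1 E5 E2 E3 E4 in H; lra.
Qed.

Definition Xs n (eps : {ffun 'I_n -> bool}) (v : 'I_n -> RR) : RR :=
  \sum_i sgn (eps i) * v i.
Definition Sp n (T : Type) (P : set T) (h : T -> 'I_n -> RR) (eps : {ffun 'I_n -> bool}) : RR :=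
  sup [set Xs eps (h p) | p in P].
Definition flipf n (m : 'I_n) (eps : {ffun 'I_n -> bool}) : {ffun 'I_n -> bool} :=
  [ffun i => if i == m then ~~ eps i else eps i].

Lemma sgn_sqr b : sgn b * sgn b = 1.
Proof. by case: b; rewrite /sgn ?mulr1 ?mulrNN ?mulr1. Qed.
Lemma sgn_norm b : `|sgn b| = 1.
Proof. by case: b; rewrite /sgn ?normrN normr1. Qed.

Lemma Xs_norm n eps (v : 'I_n -> RR) : `|Xs eps v| <= \sum_i `|v i|.
Proof.
rewrite /Xs; apply: le_trans (ler_norm_sum _ _ _) _.
by apply: ler_sum => i _; rewrite normrM sgn_norm mul1r.
Qed.

Lemma Sp_ub n T (P : set T) (h : T -> 'I_n -> RR) (B : RR) eps :
  (forall p i, P p -> `|h p i| <= B) -> has_ubound [set Xs eps (h p) | p in P].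
Proof.
move=> hB; exists (n%:R * B) => y [p Pp <-].
apply: le_trans (ler_norm _) _; apply: le_trans (Xs_norm _ _) _.
rewrite mulr_natl -[X in B *+ X]card_ord -sumr_const; apply: ler_sum => i _; exact: hB.
Qed.

Lemma Sp_ge n T (P : set T) (h : T -> 'I_n -> RR) (B : RR) eps p :
  (forall p i, P p -> `|h p i| <= B) -> P p -> Xs eps (h p) <= Sp P h eps.
Proof. move=> hB Pp; apply: (ub_le_sup (Sp_ub _ hB)); by exists p. Qed.

Lemma Sp_le n T (P : set T) (h : T -> 'I_n -> RR) eps (c : RR) :
  P !=set0 -> (forall p, P p -> Xs eps (h p) <= c) -> Sp P h eps <= c.
Proof.
move=> [p0 Pp0] hc; apply: ge_sup; first by exists (Xs eps (h p0)), p0.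
by move=> y [p Pp <-]; exact: hc.
Qed.

Lemma flipf_inj n (m : 'I_n) : injective (flipf m).
Proof.
have K : cancel (flipf m) (flipf m).
  move=> e; apply/ffunP => i; rewrite !ffunE; case: eqP => // _; exact: negbK.
exact: can_inj K.
Qed.

Lemma Xs_split n (m : 'I_n) eps v :
  Xs eps v = sgn (eps m) * v m + \sum_(i | i != m) sgn (eps i) * v i.
Proof. by rewrite /Xs (bigD1 m). Qed.

Lemma Xs_flip n (m : 'I_n) eps v :
  Xs (flipf m eps) v = - (sgn (eps m) * v m) + \sum_(i | i != m) sgn (eps i) * v i.
Proof.
rewrite (Xs_split m) ffunE eqxx; congr (_ + _).
  by case: (eps m); rewrite /sgn /= ?mulN1r ?mul1r ?opprK.
by apply: eq_bigr => i /negbTE im; rewrite ffunE im.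
Qed.

Lemma pair_step n T (P : set T) (h h' : T -> 'I_n -> RR) (t : T -> RR)
   (psi : RR -> RR) (K B : RR) (m : 'I_n) eps :
  P !=set0 ->
  (forall p i, P p -> `|h p i| <= B) -> (forall p i, P p -> `|h' p i| <= B) ->
  (forall p i, i != m -> h p i = h' p i) ->
  (forall p, h p m = psi (t p)) -> (forall p, h' p m = K * t p) ->
  (forall p q, P p -> P q -> `|psi (t p) - psi (t q)| <= K * `|t p - t q|) ->
  Sp P h eps + Sp P h (flipf m eps) <= Sp P h' eps + Sp P h' (flipf m eps).
Proof.
move=> P0 hB hB' hoff hm hm' hL.
rewrite -lerBrDr. have HH := @Sp_le n T P h eps (Sp P h' eps + Sp P h' (flipf m eps) - Sp P h (flipf m eps)) P0. apply: HH => p Pp; rewrite lerBrDr -lerBrDl.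
apply: (Sp_le P0) => q Pq; rewrite lerBrDl.
have Rq : \sum_(i | i != m) sgn (eps i) * h q i = \sum_(i | i != m) sgn (eps i) * h' q i.
  by apply: eq_bigr => i im; rewrite hoff.
have Rp : \sum_(i | i != m) sgn (eps i) * h p i = \sum_(i | i != m) sgn (eps i) * h' p i.
  by apply: eq_bigr => i im; rewrite hoff.
have A1 := Sp_ge eps hB' Pp. have A2 := Sp_ge (flipf m eps) hB' Pq.
have A3 := Sp_ge eps hB' Pq. have A4 := Sp_ge (flipf m eps) hB' Pp.
move: A1 A2 A3 A4; rewrite !(Xs_flip m) !(Xs_split m) !hm !hm' Rq Rp.
have H1 := hL p q Pp Pq.
have Ha : psi (t p) - psi (t q) <= K * `|t p - t q| := le_trans (ler_norm _) H1.
have Hb : psi (t q) - psi (t p) <= K * `|t p - t q|.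
  by apply: le_trans H1; rewrite -normrN opprB; exact: ler_norm.
have Hd : K * `|t p - t q| = K * t p - K * t q \/ K * `|t p - t q| = K * t q - K * t p.
  case: (lerP 0 (t p - t q)) => hd; [left; rewrite ger0_norm // | right; rewrite ltr0_norm //]; ring.
move: Ha Hb Hd.
set up := \sum_(i | i != m) _ * h' p i. set uq := \sum_(i | i != m) _ * h' q i.
set S1 := Sp P h' eps. set S2 := Sp P h' (flipf m eps).
set Ap := psi (t p). set Aq := psi (t q). set Kp := K * t p. set Kq := K * t q.
set N := K * `|t p - t q|.
have : sgn (eps m) = 1 \/ sgn (eps m) = -1 by case: (eps m); [left|right].
case=> ->; move=> Ha Hb [] E A1 A2 A3 A4; lra.
Qed.

Lemma sum_step n T (P : set T) (h h' : T -> 'I_n -> RR) (m : 'I_n) :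
  (forall eps, Sp P h eps + Sp P h (flipf m eps) <= Sp P h' eps + Sp P h' (flipf m eps)) ->
  \sum_eps Sp P h eps <= \sum_eps Sp P h' eps.
Proof.
move=> H.
have E1 : \sum_eps Sp P h eps = \sum_eps Sp P h (flipf m eps) := reindex_inj (@flipf_inj n m).
have E2 : \sum_eps Sp P h' eps = \sum_eps Sp P h' (flipf m eps) := reindex_inj (@flipf_inj n m).
have : \sum_eps (Sp P h eps + Sp P h (flipf m eps)) <= \sum_eps (Sp P h' eps + Sp P h' (flipf m eps)).
  by apply: ler_sum => e _; exact: H.
rewrite !big_split /= -E1 -E2; lra.
Qed.

Lemma contraction n T (P : set T) (t : T -> 'I_n -> RR) (psi : RR -> RR) (K Bt Bp : RR) :
  P !=set0 ->
  (forall p i, P p -> `|t p i| <= Bt) -> (forall p i, P p -> `|psi (t p i)| <= Bp) ->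
  (forall p q i, P p -> P q -> `|psi (t p i) - psi (t q i)| <= K * `|t p i - t q i|) ->
  \sum_eps Sp P (fun p i => psi (t p i)) eps <= \sum_eps Sp P (fun p i => K * t p i) eps.
Proof.
move=> P0 hBt hBp hL.
pose hh (j : nat) p (i : 'I_n) := if (i < j)%N then K * t p i else psi (t p i).
have hb : forall j p i, P p -> `|hh j p i| <= `|K| * `|Bt| + `|Bp|.
  move=> j p i Pp; rewrite /hh; case: ifP => _.
    rewrite normrM; have := hBt p i Pp; have := normr_ge0 K; have := normr_ge0 Bp.
    have := ler_norm Bt; have := normr_ge0 (t p i); nra.
  have := hBp p i Pp; have := ler_norm Bp; have := normr_ge0 K; have := normr_ge0 Bt; nra.
have step : forall j, (j <= n)%N -> \sum_eps Sp P (hh 0%N) eps <= \sum_eps Sp P (hh j) eps.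
  elim=> [|j IH] hj; first exact: lexx.
  apply: le_trans (IH (ltnW hj)) _.
  have jn : (j < n)%N := hj.
  apply: (sum_step (m := Ordinal jn)) => eps.
  apply: (pair_step (t := fun p => t p (Ordinal jn)) (psi := psi) (K := K)) => //.
  - exact: hb.
  - exact: hb.
  - move=> p i im; rewrite /hh; congr (if _ then _ else _).
    rewrite [X in _ = X]ltnS [X in _ = X]leq_eqVlt.
    have -> : (nat_of_ord i == j) = false.
      by apply/negbTE; apply: contra im => /eqP e; apply/eqP/val_inj.
    by [].
  - by move=> p; rewrite /hh /= ltnn.
  - by move=> p; rewrite /hh /= ltnSn.
  - move=> p q Pp Pq; exact: hL.
have E0 : (fun p i => psi (t p i)) = hh 0%N.
  by apply: funext => p; apply: funext => i; rewrite /hh ltn0.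
have En : (fun p i => K * t p i) = hh n.
  by apply: funext => p; apply: funext => i; rewrite /hh ltn_ord.
rewrite E0 En; exact: step.
Qed.

Definition negf n (eps : {ffun 'I_n -> bool}) : {ffun 'I_n -> bool} := [ffun i => ~~ eps i].

Lemma negf_inj n : injective (@negf n).
Proof.
have K : cancel (@negf n) (@negf n) by move=> e; apply/ffunP => i; rewrite !ffunE negbK.
exact: can_inj K.
Qed.

Lemma sum_negf n (F : {ffun 'I_n -> bool} -> RR) : \sum_eps F (negf eps) = \sum_eps F eps.
Proof. by rewrite [RHS](reindex_inj (@negf_inj n)). Qed.

Lemma sgn_neg b : sgn (~~ b) = - sgn b.
Proof. by case: b; rewrite /sgn /= ?opprK. Qed.

Lemma Sp_diff n T (P : set T) (u v : T -> 'I_n -> RR) (B : RR) eps :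
  P !=set0 -> (forall p i, P p -> `|u p i| <= B) -> (forall p i, P p -> `|v p i| <= B) ->
  Sp P (fun p i => u p i - v p i) eps <= Sp P u eps + Sp P v (negf eps).
Proof.
move=> P0 hu hv; apply: (Sp_le P0) => p Pp.
have -> : Xs eps (fun i => u p i - v p i) = Xs eps (u p) + Xs (negf eps) (v p).
  rewrite /Xs -big_split /=; apply: eq_bigr => i _; rewrite ffunE sgn_neg; ring.
apply: lerD; [exact: (Sp_ge _ hu) | exact: (Sp_ge _ hv)].
Qed.

Lemma CSabs (m : nat) (u v : 'I_m -> RR) :
  `|\sum_i u i * v i| <= Num.sqrt (\sum_i u i ^+ 2) * Num.sqrt (\sum_i v i ^+ 2).
Proof.
rewrite -sqrtr_sqr -sqrtrM; last by apply: sumr_ge0 => i _; exact: sqr_ge0.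
apply: ler_wsqrtr; exact: CS2.
Qed.

Lemma card_eps n : (\sum_(eps : {ffun 'I_n -> bool}) (1 : RR)) = 2 ^+ n.
Proof. rewrite sumr_const card_ffun card_bool card_ord natrX. by []. Qed.

Lemma sgn_corr n (i j : 'I_n) :
  \sum_(eps : {ffun 'I_n -> bool}) sgn (eps i) * sgn (eps j) = if i == j then 2 ^+ n else 0.
Proof.
case: eqP => [->|ij].
  by rewrite -card_eps; apply: eq_bigr => e _; rewrite sgn_sqr.
set S := \sum_eps _.
have : S = - S.
  rewrite {1}/S (reindex_inj (@flipf_inj n i)) /S -sumrN; apply: eq_bigr => e _.
  rewrite !ffunE eqxx; case: eqP => [ji|_]; first by exfalso; apply: ij.
  by rewrite sgn_neg mulNr.
move=> H; lra.
Qed.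

Lemma sq_moment n (a : 'I_n -> RR) :
  \sum_(eps : {ffun 'I_n -> bool}) (\sum_i sgn (eps i) * a i) ^+ 2 = 2 ^+ n * \sum_i a i ^+ 2.
Proof.
have E : forall eps : {ffun 'I_n -> bool}, (\sum_i sgn (eps i) * a i) ^+ 2 =
    \sum_i \sum_j (a i * a j) * (sgn (eps i) * sgn (eps j)).
  move=> e; rewrite expr2 mulr_suml; apply: eq_bigr => i _; rewrite mulr_sumr.
  by apply: eq_bigr => j _; ring.
under eq_bigr do rewrite E.
rewrite exchange_big /=.
under eq_bigr do rewrite exchange_big /=.
rewrite mulr_sumr; apply: eq_bigr => i _.
have F : forall j, \sum_(e : {ffun 'I_n -> bool}) a i * a j * (sgn (e i) * sgn (e j))
   = a i * a j * (if i == j then 2 ^+ n else 0).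
  by move=> j; rewrite -sgn_corr mulr_sumr.
under eq_bigr do rewrite F.
rewrite (bigD1 i) //= big1; last first.
  by move=> j ji; rewrite eq_sym (negbTE ji) mulr0.
by rewrite eqxx addr0 expr2 mulrC.
Qed.

Lemma Vn_bound n (m : nat) (X : 'I_n -> 'I_m -> RR) (b : RR) : 0 < b -> (1 <= n)%N ->
  (forall i, \sum_l X i l ^+ 2 <= b ^+ 2) ->
  \sum_(eps : {ffun 'I_n -> bool}) Num.sqrt (\sum_l (\sum_i sgn (eps i) * X i l) ^+ 2) <= 2 ^+ n * (b * Num.sqrt n%:R).
Proof.
move=> b0 n1 hX.
set c := b * Num.sqrt n%:R.
have sn : 0 < Num.sqrt (n%:R : RR) by rewrite sqrtr_gt0 ltr0n.
have c0 : 0 < c by apply: mulr_gt0.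
have c2 : c ^+ 2 = b ^+ 2 * n%:R by rewrite /c exprMn sqr_sqrtr // ler0n.
have amgm : forall y : RR, 0 <= y -> y <= (y ^+ 2 + c ^+ 2) / (2 * c).
  move=> y y0; rewrite ler_pdivlMr ?mulr_gt0 //.
  have := sqr_ge0 (y - c); lra.
set V := fun eps : {ffun 'I_n -> bool} => \sum_l (\sum_i sgn (eps i) * X i l) ^+ 2.
have V0 : forall e, 0 <= V e by move=> e; apply: sumr_ge0 => l _; exact: sqr_ge0.
have SV : \sum_eps V eps <= 2 ^+ n * c ^+ 2.
  rewrite /V exchange_big /=.
  under eq_bigr do rewrite sq_moment.
  rewrite -mulr_sumr exchange_big /= c2; apply: ler_wpM2l; first exact: exprn_ge0.
  rewrite mulr_natr -[X in _ <= _ *+ X]card_ord -sumr_const.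
  by apply: ler_sum => i _; exact: hX.
apply: le_trans (_ : \sum_eps (V eps + c ^+ 2) / (2 * c) <= _).
  apply: ler_sum => e _; have := amgm _ (sqrtr_ge0 (V e)).
  by rewrite sqr_sqrtr.
rewrite -mulr_suml big_split /= sumr_const card_ffun card_bool card_ord.
have E2 : forall y : RR, y *+ (2 ^ n)%N = y * 2 ^+ n by move=> y; rewrite -[LHS]mulr_natr natrX.
rewrite E2 ler_pdivrMr ?mulr_gt0 //.
move: SV; rewrite /c; set P := (2 : RR) ^+ n; set q := Num.sqrt _; lra.
Qed.

Definition dotv d (u v : 'cV[RR]_d) : RR := \sum_l u l 0 * v l 0.
Definition ball d (r : RR) := [set w : 'cV[RR]_d | norm2 w <= r].

Lemma norm2_ge0 d (v : 'cV[RR]_d) : 0 <= norm2 v.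
Proof. exact: sqrtr_ge0. Qed.

Lemma norm2_sq d (v : 'cV[RR]_d) : norm2 v ^+ 2 = \sum_l v l 0 ^+ 2.
Proof. by rewrite /norm2 sqr_sqrtr //; apply: sumr_ge0 => l _; exact: sqr_ge0. Qed.

Lemma dot_abs d (u v : 'cV[RR]_d) : `|dotv u v| <= norm2 u * norm2 v.
Proof. exact: CSabs. Qed.

Lemma ball0 (d : nat) (r : RR) : 0 <= r -> @ball d r 0.
Proof.
move=> r0; rewrite /ball /= /norm2 big1 ?sqrtr0 // => l _.
by rewrite mxE expr0n.
Qed.

Lemma ball_ne (d : nat) (r : RR) : 0 <= r -> @ball d r !=set0.
Proof. by move=> r0; exists 0; exact: ball0. Qed.

Lemma dot_bound d (w v : 'cV[RR]_d) (r b : RR) : norm2 w <= r -> norm2 v <= b ->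
  `|dotv w v| <= r * b.
Proof.
move=> hw hv; apply: le_trans (dot_abs w v) _.
apply: ler_pM => //; exact: norm2_ge0.
Qed.

Lemma lin_Sp d n (x : 'I_n -> 'cV[RR]_d) (c r : RR) eps : 0 <= c -> 0 <= r ->
  Sp (@ball d r) (fun w i => c * dotv w (x i)) eps <=
  c * r * Num.sqrt (\sum_l (\sum_i sgn (eps i) * x i l 0) ^+ 2).
Proof.
move=> c0 r0; apply: (Sp_le (@ball_ne d r r0)) => w hw.
have -> : Xs eps (fun i => c * dotv w (x i)) = c * \sum_l w l 0 * (\sum_i sgn (eps i) * x i l 0).
  rewrite /Xs /dotv mulr_sumr.
  under eq_bigr do rewrite mulr_sumr.
  under eq_bigr do rewrite mulr_sumr.
  rewrite exchange_big /=; apply: eq_bigr => l _.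
  rewrite mulr_sumr mulr_sumr; apply: eq_bigr => i _; ring.
rewrite -mulrA; apply: ler_wpM2l => //.
apply: le_trans (ler_norm _) _; apply: le_trans (CSabs _ _) _.
apply: ler_wpM2r; first exact: sqrtr_ge0.
exact: hw.
Qed.

Definition gg d n (phi : RR -> RR) (x x' : 'I_n -> 'cV[RR]_d) (w : 'cV[RR]_d) (i : 'I_n) : RR :=
  (phi (dotv w (x i)) - phi (dotv w (x' i))) ^+ 2.

Lemma phi_bound (phi : RR -> RR) (L s : RR) :
  (forall s t : RR, `|phi s - phi t| <= L * `|s - t|) -> phi 0 = 0 ->
  `|phi s| <= L * `|s|.
Proof. by move=> hL h0; have := hL s 0; rewrite h0 !subr0. Qed.

Lemma S_expect d n (phi : RR -> RR) (L b r : RR) (x x' : 'I_n -> 'cV[RR]_d) :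
  (1 <= n)%N ->
  (forall s t : RR, `|phi s - phi t| <= L * `|s - t|) -> phi 0 = 0 ->
  0 <= L -> 0 < b -> 0 <= r ->
  (forall i, norm2 (x i) <= b) -> (forall i, norm2 (x' i) <= b) ->
  \sum_eps Sp (@ball d r) (gg phi x x') eps <=
    2 ^+ n * (8 * L ^+ 2 * b ^+ 2 * r ^+ 2 * Num.sqrt n%:R).
Proof.
move=> n1 hL h0 L0 b0 r0 hx hx'.
have P0 := @ball_ne d r r0.
have pb : forall (y : 'I_n -> 'cV[RR]_d) w i, (forall i, norm2 (y i) <= b) -> @ball d r w ->
    `|phi (dotv w (y i))| <= L * (r * b).
  move=> y w i hy hw; apply: le_trans (phi_bound _ hL h0) _.
  by apply: ler_wpM2l => //; exact: dot_bound.
set K := 4 * L * b * r.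
have K0 : 0 <= K by rewrite /K !mulr_ge0 // ltW.
pose tt w i := phi (dotv w (x i)) - phi (dotv w (x' i)).
have ttb : forall w i, @ball d r w -> `|tt w i| <= 2 * L * b * r.
  move=> w i hw; apply: le_trans (ler_normB _ _) _.
  have := pb x w i hx hw; have := pb x' w i hx' hw; lra.
have C1 : \sum_eps Sp (@ball d r) (gg phi x x') eps <= \sum_eps Sp (@ball d r) (fun w i => K * tt w i) eps.
  apply: (contraction (psi := fun s => s ^+ 2) (Bt := 2 * L * b * r) (Bp := (2 * L * b * r) ^+ 2)) => //.
  - move=> w i hw /=; rewrite normrX; apply: lerXn2r; rewrite ?nnegrE //; last exact: ttb.
    by rewrite !mulr_ge0 // ltW.
  - move=> p q i hp hq /=.
    rewrite -[_ ^+ 2 - _]/(tt p i ^+ 2 - tt q i ^+ 2) subr_sqr normrM mulrC.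
    apply: ler_wpM2r; first exact: normr_ge0.
    apply: le_trans (ler_normD _ _) _.
    have := ttb p i hp; have := ttb q i hq; rewrite /K; lra.
have C2 : forall (y : 'I_n -> 'cV[RR]_d), (forall i, norm2 (y i) <= b) ->
    \sum_eps Sp (@ball d r) (fun w i => K * phi (dotv w (y i))) eps <=
    2 ^+ n * (K * L * r * (b * Num.sqrt n%:R)).
  move=> y hy.
  apply: le_trans (_ : \sum_eps Sp (@ball d r) (fun w i => (K * L) * dotv w (y i)) eps <= _).
    apply: (contraction (psi := fun s => K * phi s) (Bt := r * b) (Bp := K * (L * (r * b)))) => //.
    - by move=> w i hw; exact: dot_bound.
    - by move=> w i hw /=; rewrite normrM ger0_norm //; apply: ler_wpM2l => //; exact: pb.
    - move=> p q i _ _ /=; rewrite -mulrBr normrM ger0_norm // -mulrA.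
      by apply: ler_wpM2l => //; exact: hL.
  apply: le_trans (_ : \sum_(eps : {ffun 'I_n -> bool}) (K * L * r) *
      Num.sqrt (\sum_l (\sum_i sgn (eps i) * y i l 0) ^+ 2) <= _).
    apply: ler_sum => e _; apply: lin_Sp => //; exact: mulr_ge0.
  have HV : \sum_(eps : {ffun 'I_n -> bool}) Num.sqrt (\sum_l (\sum_i sgn (eps i) * y i l 0) ^+ 2)
      <= 2 ^+ n * (b * Num.sqrt n%:R).
    apply: Vn_bound => // i.
    by rewrite -norm2_sq; have := hy i; have := norm2_ge0 (y i); nra.
  rewrite -mulr_sumr.
  have KLr : 0 <= K * L * r by apply: mulr_ge0 => //; apply: mulr_ge0.
  by rewrite mulrCA; apply: ler_wpM2l.
have E : (fun w i => K * tt w i) =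
    (fun w i => K * phi (dotv w (x i)) - K * phi (dotv w (x' i))).
  by apply: funext => w; apply: funext => i; rewrite /tt mulrBr.
apply: le_trans C1 _; rewrite E.
apply: le_trans (_ : \sum_eps (Sp (@ball d r) (fun w i => K * phi (dotv w (x i))) eps +
   Sp (@ball d r) (fun w i => K * phi (dotv w (x' i))) (negf eps)) <= _).
  apply: ler_sum => e _; apply: (Sp_diff (B := K * (L * (r * b)))) => //.
  - by move=> w i hw; rewrite normrM ger0_norm //; apply: ler_wpM2l => //; exact: pb.
  - by move=> w i hw; rewrite normrM ger0_norm //; apply: ler_wpM2l => //; exact: pb.
rewrite big_split /= (sum_negf (fun e => Sp (@ball d r) (fun w i => K * phi (dotv w (x' i))) e)).
have := C2 x hx; have := C2 x' hx'.
rewrite /K; set P := 2 ^+ n; set q := Num.sqrt _; set S1 := \sum_eps _; set S2 := \sum_eps _.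
move=> h1 h2.
have -> : P * (8 * L ^+ 2 * b ^+ 2 * r ^+ 2 * q) = P * (4 * L * b * r * L * r * (b * q)) +
   P * (4 * L * b * r * L * r * (b * q)) by ring.
exact: lerD.
Qed.

Definition Sr d n (phi : RR -> RR) (x x' : 'I_n -> 'cV[RR]_d) (r : RR) eps :=
  Sp (@ball d r) (gg phi x x') eps.

Lemma gg_bound d n (phi : RR -> RR) (L b r : RR) (x x' : 'I_n -> 'cV[RR]_d) w i :
  (forall s t : RR, `|phi s - phi t| <= L * `|s - t|) -> phi 0 = 0 ->
  0 <= L -> 0 < b ->
  (forall i, norm2 (x i) <= b) -> (forall i, norm2 (x' i) <= b) ->
  norm2 w <= r -> `|gg phi x x' w i| <= (2 * L * b * r) ^+ 2.
Proof.
move=> hL h0 L0 b0 hx hx' hw.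
have r0 : 0 <= r := le_trans (norm2_ge0 w) hw.
have pb : forall (y : 'I_n -> 'cV[RR]_d), (forall i, norm2 (y i) <= b) ->
    `|phi (dotv w (y i))| <= L * (r * b).
  move=> y hy; apply: le_trans (phi_bound _ hL h0) _.
  by apply: ler_wpM2l => //; exact: dot_bound.
rewrite /gg normrX; apply: lerXn2r; rewrite ?nnegrE ?normr_ge0 //.
  by rewrite !mulr_ge0 // ltW.
apply: le_trans (ler_normB _ _) _.
have := pb x hx; have := pb x' hx'; lra.
Qed.

Lemma Xs_le_nB n eps (v : 'I_n -> RR) (B : RR) : (forall i, `|v i| <= B) -> Xs eps v <= n%:R * B.
Proof.
move=> hB; apply: le_trans (ler_norm _) _; apply: le_trans (Xs_norm _ _) _.
rewrite mulr_natl -[X in B *+ X]card_ord -sumr_const; apply: ler_sum => i _; exact: hB.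
Qed.

Lemma dotv0 d (v : 'cV[RR]_d) : dotv 0 v = 0.
Proof. by rewrite /dotv big1 // => l _; rewrite mxE mul0r. Qed.

Lemma Sr_ge0 d n (phi : RR -> RR) (L b r : RR) (x x' : 'I_n -> 'cV[RR]_d) eps :
  (forall s t : RR, `|phi s - phi t| <= L * `|s - t|) -> phi 0 = 0 ->
  0 <= L -> 0 < b -> 0 <= r ->
  (forall i, norm2 (x i) <= b) -> (forall i, norm2 (x' i) <= b) ->
  0 <= Sr phi x x' r eps.
Proof.
move=> hL h0 L0 b0 r0 hx hx'.
have -> : (0 : RR) = Xs eps (gg phi x x' 0).
  by rewrite /Xs big1 // => i _; rewrite /gg !dotv0 subrr expr0n mulr0.
apply: (Sp_ge (B := (2 * L * b * r) ^+ 2)); last exact: ball0.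
by move=> w i hw; exact: gg_bound.
Qed.

Lemma Sr_mono d n (phi : RR -> RR) (L b r r' : RR) (x x' : 'I_n -> 'cV[RR]_d) eps :
  (forall s t : RR, `|phi s - phi t| <= L * `|s - t|) -> phi 0 = 0 ->
  0 <= L -> 0 < b -> 0 <= r -> r <= r' ->
  (forall i, norm2 (x i) <= b) -> (forall i, norm2 (x' i) <= b) ->
  Sr phi x x' r eps <= Sr phi x x' r' eps.
Proof.
move=> hL h0 L0 b0 r0 rr hx hx'.
apply: (Sp_le (ball_ne d r0)) => w hw.
apply: (Sp_ge (B := (2 * L * b * r') ^+ 2)); last exact: le_trans hw rr.
by move=> v i hv; exact: gg_bound.
Qed.

Lemma Sr_triv d n (phi : RR -> RR) (L b r : RR) (x x' : 'I_n -> 'cV[RR]_d) eps :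
  (forall s t : RR, `|phi s - phi t| <= L * `|s - t|) -> phi 0 = 0 ->
  0 <= L -> 0 < b -> 0 <= r ->
  (forall i, norm2 (x i) <= b) -> (forall i, norm2 (x' i) <= b) ->
  Sr phi x x' r eps <= n%:R * (2 * L * b * r) ^+ 2.
Proof.
move=> hL h0 L0 b0 r0 hx hx'.
apply: (Sp_le (ball_ne d r0)) => w hw; apply: Xs_le_nB => i; exact: gg_bound.
Qed.

Definition rho (a' : RR) (m : nat) : RR := a' * (2^-1) ^+ m.

Lemma rho_gt0 a' m : 0 < a' -> 0 < rho a' m.
Proof. by move=> a0; rewrite /rho mulr_gt0 // exprn_gt0 // invr_gt0. Qed.

Lemma rhoS a' m : rho a' m.+1 = rho a' m / 2.
Proof. by rewrite /rho exprSr mulrA. Qed.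

Lemma dichot (a' r : RR) M : 0 < a' -> r <= a' ->
  r <= rho a' M \/ exists2 m : 'I_M, rho a' m.+1 < r & r <= rho a' m.
Proof.
move=> a0 ra; elim: M => [|M [IH|[m h1 h2]]].
- by left; rewrite /rho expr0 mulr1.
- case: (lerP r (rho a' M.+1)) => h; first by left.
  by right; exists ord_max.
- by right; exists (widen_ord (leqnSn M) m).
Qed.

Definition Qf d n (phi : RR -> RR) (x x' : 'I_n -> 'cV[RR]_d) (L b a' : RR) (M : nat) eps : RR :=
  \sum_(m < M) (2 / rho a' m) * Sr phi x x' (rho a' m) eps + n%:R * (2 * L * b) ^+ 2 * rho a' M.

Lemma peel d n (phi : RR -> RR) (L b a' r : RR) (x x' : 'I_n -> 'cV[RR]_d) M eps :
  (forall s t : RR, `|phi s - phi t| <= L * `|s - t|) -> phi 0 = 0 ->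
  0 <= L -> 0 < b -> 0 < a' -> 0 <= r -> r <= a' ->
  (forall i, norm2 (x i) <= b) -> (forall i, norm2 (x' i) <= b) ->
  Sr phi x x' r eps <= r * Qf phi x x' L b a' M eps.
Proof.
move=> hL h0 L0 b0 a0 r0 ra hx hx'.
have T0 : forall m, 0 <= (2 / rho a' m) * Sr phi x x' (rho a' m) eps.
  move=> m; apply: mulr_ge0; first by rewrite divr_ge0 // ltW // rho_gt0.
  exact: (Sr_ge0 _ hL h0 L0 b0 (ltW (rho_gt0 m a0)) hx hx').
have S0 : 0 <= \sum_(m < M) (2 / rho a' m) * Sr phi x x' (rho a' m) eps.
  by apply: sumr_ge0 => m _; exact: T0.
have R0 : 0 <= n%:R * (2 * L * b) ^+ 2 * rho a' M.
  by apply: mulr_ge0; [rewrite mulr_ge0 ?ler0n ?sqr_ge0 | exact: ltW (rho_gt0 M a0)].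
rewrite /Qf; case: (dichot M a0 ra) => [hM|[m h1 h2]].
- apply: le_trans (Sr_triv eps hL h0 L0 b0 r0 hx hx') _.
  have : r * (n%:R * (2 * L * b) ^+ 2 * r) <= r * (n%:R * (2 * L * b) ^+ 2 * rho a' M).
    apply: ler_wpM2l => //; apply: ler_wpM2l => //; by rewrite mulr_ge0 ?ler0n ?sqr_ge0.
  have : r * (n%:R * (2 * L * b) ^+ 2 * rho a' M) <=
      r * (\sum_(m < M) (2 / rho a' m) * Sr phi x x' (rho a' m) eps + n%:R * (2 * L * b) ^+ 2 * rho a' M).
    by apply: ler_wpM2l => //; rewrite lerDr.
  move=> H1 H2; apply: le_trans (le_trans H2 H1).
  by rewrite le_eqVlt; apply/orP; left; apply/eqP; ring.
- have rm0 := rho_gt0 m a0.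
  have Sm0 := Sr_ge0 eps hL h0 L0 b0 (ltW rm0) hx hx'.
  have H1 : Sr phi x x' r eps <= Sr phi x x' (rho a' m) eps := Sr_mono _ hL h0 L0 b0 r0 h2 hx hx'.
  have H2 : Sr phi x x' (rho a' m) eps <= r * ((2 / rho a' m) * Sr phi x x' (rho a' m) eps).
    rewrite mulrA -[X in X <= _]mul1r; apply: ler_wpM2r => //.
    rewrite rhoS in h1; rewrite mulrA ler_pdivlMr // mul1r; lra.
  have H3 : (2 / rho a' m) * Sr phi x x' (rho a' m) eps <=
      \sum_(m < M) (2 / rho a' m) * Sr phi x x' (rho a' m) eps.
    rewrite (bigD1 m) //= lerDl; apply: sumr_ge0 => j _; exact: T0.
  apply: le_trans H1 _; apply: le_trans H2 _; apply: ler_wpM2l => //.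
  apply: le_trans H3 _; by rewrite lerDl.
Qed.

Lemma geom_sum M : \sum_(m < M) ((2 : RR)^-1) ^+ m = 2 - 2 * (2^-1) ^+ M.
Proof.
elim: M => [|M IH]; first by rewrite big_ord0 expr0 mulr1 subrr.
by rewrite big_ord_recr /= IH exprSr; field.
Qed.

Lemma n_pow n : n%:R * ((2 : RR)^-1) ^+ n <= 1.
Proof.
rewrite exprVn -[X in _ <= X](@divff _ (2 ^+ n)) ?expf_neq0 //.
rewrite ler_wpM2r // ?invr_ge0 ?exprn_ge0 //.
  rewrite -natrX ler_nat; exact: ltnW (ltn_expl _ _).
apply/negP => /eqP H; move: H; lra.
Qed.

Lemma EQ d n (phi : RR -> RR) (L b a' : RR) (x x' : 'I_n -> 'cV[RR]_d) :
  (1 <= n)%N ->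
  (forall s t : RR, `|phi s - phi t| <= L * `|s - t|) -> phi 0 = 0 ->
  0 <= L -> 0 < b -> 0 < a' ->
  (forall i, norm2 (x i) <= b) -> (forall i, norm2 (x' i) <= b) ->
  \sum_eps Qf phi x x' L b a' n eps <= 2 ^+ n * (L ^+ 2 * b ^+ 2 * a' * (36 * Num.sqrt n%:R)).
Proof.
move=> n1 hL h0 L0 b0 a0 hx hx'.
rewrite /Qf big_split /= exchange_big /= sumr_const card_ffun card_bool card_ord.
have P0 : (0 : RR) < 2 ^+ n by rewrite exprn_gt0.
have sn : 1 <= Num.sqrt (n%:R : RR) by rewrite -[X in X <= _]sqrtr1; apply: ler_wsqrtr; rewrite ler1n.
have E1 : \sum_(m < n) \sum_eps 2 / rho a' m * Sr phi x x' (rho a' m) eps <=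
    \sum_(m < n) 2 ^+ n * (16 * L ^+ 2 * b ^+ 2 * Num.sqrt n%:R * a') * (2^-1) ^+ m.
  apply: ler_sum => m _; rewrite -mulr_sumr.
  have rm := rho_gt0 m a0.
  have := S_expect (r := rho a' m) n1 hL h0 L0 b0 (ltW rm) hx hx'.
  rewrite -/(Sr phi x x' (rho a' m)) => H.
  apply: le_trans (_ : 2 / rho a' m * (2 ^+ n * (8 * L ^+ 2 * b ^+ 2 * rho a' m ^+ 2 * Num.sqrt n%:R)) <= _).
    by apply: ler_wpM2l => //; rewrite divr_ge0 // ltW.
  rewrite le_eqVlt; apply/orP; left; apply/eqP; rewrite /rho; field.
  by rewrite expf_neq0 ?gt_eqF // ?invr_gt0 //.
apply: le_trans (lerD E1 (lexx _)) _.
rewrite -mulr_sumr geom_sum.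
have h0' : 0 <= ((2 : RR)^-1) ^+ n by rewrite exprn_ge0 // invr_ge0.
have np := n_pow n.
have E2 : (2 ^ n)%N%:R = (2 : RR) ^+ n by rewrite natrX.
rewrite -[X in _ + X <= _]mulr_natr E2 /rho.
move: np h0' sn.
set P := (2 : RR) ^+ n; set h := ((2 : RR)^-1) ^+ n; set q := Num.sqrt _.
move=> np h0' sn.
have Lb : 0 <= L ^+ 2 * b ^+ 2 * a' by rewrite !mulr_ge0 ?sqr_ge0 // ltW.
set W := L ^+ 2 * b ^+ 2 * a' in Lb *.
have -> : P * (16 * L ^+ 2 * b ^+ 2 * q * a') * (2 - 2 * h) + n%:R * (2 * L * b) ^+ 2 * (a' * h) * P
   = P * W * (32 * q - 32 * q * h + 4 * (n%:R * h)) by rewrite /W; ring.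
have -> : P * (W * (36 * q)) = P * W * (36 * q) by ring.
apply: ler_wpM2l; first by rewrite mulr_ge0 // ltW.
have hq : 0 <= q * h by rewrite mulr_ge0 // sqrtr_ge0.
lra.
Qed.

Lemma norm2_0 m : norm2 (0 : 'cV[RR]_m) = 0.
Proof. by rewrite /norm2 big1 ?sqrtr0 // => l _; rewrite mxE expr0n. Qed.

Lemma norm2_delta k (j : 'I_k) : norm2 (delta_mx j 0 : 'cV[RR]_k) = 1.
Proof.
rewrite /norm2 (bigD1 j) //= big1 ?addr0.
  by rewrite mxE !eqxx /= expr1n sqrtr1.
by move=> i ij; rewrite mxE (negbTE ij) /= expr0n.
Qed.

Lemma opnorm_ub d k (A : 'M[RR]_(d, k)) :
  has_ubound [set norm2 (A *m v) | v in [set v : 'cV[RR]_k | norm2 v <= 1]].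
Proof.
exists (Num.sqrt (\sum_l \sum_j A l j ^+ 2)) => y [v hv <-].
apply: ler_wsqrtr; apply: ler_sum => l _.
have hv2 : \sum_j v j 0 ^+ 2 <= 1.
  by rewrite -norm2_sq; have := norm2_ge0 v; move: hv => /= hv; nra.
rewrite mxE; apply: le_trans (CS2 (fun j => A l j) (fun j => v j 0)) _.
rewrite -[X in _ <= X]mulr1; apply: ler_wpM2l => //.
by apply: sumr_ge0 => j _; exact: sqr_ge0.
Qed.

Lemma col_le_opnorm d k (A : 'M[RR]_(d, k)) j : norm2 (col j A) <= opnorm A.
Proof.
apply: (ub_le_sup (opnorm_ub A)); exists (delta_mx j 0); last by rewrite colE.
by rewrite /= norm2_delta.
Qed.

Lemma J0 d k (a a' : RR) : 0 < a -> 0 < a' -> @Jset d k a a' 0.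
Proof.
move=> a0 a0'; split.
  by rewrite /norm21 big1 ?ltW // => j _; rewrite col0 norm2_0.
apply: ge_sup; first by exists 0, 0; [rewrite /= norm2_0 ler01 | rewrite mul0mx norm2_0].
by move=> y [v _ <-]; rewrite mul0mx norm2_0 ltW.
Qed.

Lemma zeta_gg d n k (phi : RR -> RR) (x x' : 'I_n -> 'cV[RR]_d) (A : 'M[RR]_(d, k)) i :
  zeta (map_mx phi (A^T *m x i)) (map_mx phi (A^T *m x' i)) =
  k%:R^-1 * \sum_j gg phi x x' (col j A) i.
Proof.
rewrite /zeta norm2_sq; congr (_ * _); apply: eq_bigr => j _.
rewrite /gg !mxE /dotv; congr ((phi _ - phi _) ^+ 2);
  by apply: eq_bigr => l _; rewrite !mxE.
Qed.

Lemma Qf_ge0 d n (phi : RR -> RR) (L b a' : RR) (x x' : 'I_n -> 'cV[RR]_d) M eps :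
  (forall s t : RR, `|phi s - phi t| <= L * `|s - t|) -> phi 0 = 0 ->
  0 <= L -> 0 < b -> 0 < a' ->
  (forall i, norm2 (x i) <= b) -> (forall i, norm2 (x' i) <= b) ->
  0 <= Qf phi x x' L b a' M eps.
Proof.
move=> hL h0 L0 b0 a0 hx hx'.
apply: addr_ge0.
  apply: sumr_ge0 => m _; apply: mulr_ge0; first by rewrite divr_ge0 // ltW // rho_gt0.
  exact: (Sr_ge0 _ hL h0 L0 b0 (ltW (rho_gt0 m a0)) hx hx').
by apply: mulr_ge0; [rewrite mulr_ge0 ?ler0n ?sqr_ge0 | exact: ltW (rho_gt0 M a0)].
Qed.

Lemma eps_bound d n k (phi : RR -> RR) (L b a a' : RR) (x x' : 'I_n -> 'cV[RR]_d)
    (A : 'M[RR]_(d, k)) M eps :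
  (forall s t : RR, `|phi s - phi t| <= L * `|s - t|) -> phi 0 = 0 ->
  0 <= L -> 0 < b -> 0 < a' ->
  (forall i, norm2 (x i) <= b) -> (forall i, norm2 (x' i) <= b) ->
  @Jset d k a a' A ->
  Xs eps (fun i => zeta (map_mx phi (A^T *m x i)) (map_mx phi (A^T *m x' i))) <=
  k%:R^-1 * (a * Qf phi x x' L b a' M eps).
Proof.
move=> hL h0 L0 b0 a0 hx hx' [hA1 hA2].
have Q0 := Qf_ge0 M eps hL h0 L0 b0 a0 hx hx'.
have -> : Xs eps (fun i => zeta (map_mx phi (A^T *m x i)) (map_mx phi (A^T *m x' i))) =
    k%:R^-1 * \sum_j Xs eps (gg phi x x' (col j A)).
  rewrite /Xs mulr_sumr; under eq_bigr do rewrite zeta_gg mulr_sumr.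
  under eq_bigr do rewrite mulr_sumr.
  rewrite exchange_big /=; apply: eq_bigr => j _.
  rewrite mulr_sumr; apply: eq_bigr => i _; ring.
apply: ler_wpM2l; first by rewrite invr_ge0 ler0n.
apply: le_trans (_ : \sum_j norm2 (col j A) * Qf phi x x' L b a' M eps <= _).
  apply: ler_sum => j _.
  have r0 := norm2_ge0 (col j A).
  apply: le_trans (_ : Sr phi x x' (norm2 (col j A)) eps <= _).
    apply: (Sp_ge (B := (2 * L * b * norm2 (col j A)) ^+ 2)); last exact: lexx.
    by move=> w i hw; exact: gg_bound.
  apply: peel => //; exact: le_trans (col_le_opnorm A j) hA2.
rewrite -mulr_suml; exact: ler_wpM2r.
Qed.

Lemma rad_bound d n k (phi : RR -> RR) (L b a a' : RR) (x x' : 'I_n -> 'cV[RR]_d) :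
  (1 <= n)%N -> (1 <= k)%N ->
  (forall s t : RR, `|phi s - phi t| <= L * `|s - t|) -> phi 0 = 0 ->
  0 <= L -> 0 < b -> 0 < a -> 0 < a' ->
  (forall i, norm2 (x i) <= b) -> (forall i, norm2 (x' i) <= b) ->
  rademacher (Fk phi x x' (@Jset d k a a')) <=
  n%:R^-1 * (k%:R^-1 * (a * (L ^+ 2 * b ^+ 2 * a' * (36 * Num.sqrt n%:R)))).
Proof.
move=> n1 k1 hL h0 L0 b0 a0 a0' hx hx'.
rewrite /rademacher; apply: ler_wpM2l; first by rewrite invr_ge0 ler0n.
have P0 : (0 : RR) < 2 ^+ n by rewrite exprn_gt0.
rewrite ler_pdivrMl //.
apply: le_trans (_ : \sum_eps k%:R^-1 * (a * Qf phi x x' L b a' n eps) <= _).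
  apply: ler_sum => eps _; apply: ge_sup.
    pose A0 := (0 : 'M[RR]_(d, k)).
    exists (Xs eps (fun i => zeta (map_mx phi (A0^T *m x i)) (map_mx phi (A0^T *m x' i)))).
    exists (fun i => zeta (map_mx phi (A0^T *m x i)) (map_mx phi (A0^T *m x' i))) => //.
    by exists A0 => //; exact: J0.
  move=> y [f [A hA ->] <-]; exact: eps_bound.
rewrite -!mulr_sumr.
have -> : 2 ^+ n * (k%:R^-1 * (a * (L ^+ 2 * b ^+ 2 * a' * (36 * Num.sqrt n%:R)))) =
  k%:R^-1 * (a * (2 ^+ n * (L ^+ 2 * b ^+ 2 * a' * (36 * Num.sqrt n%:R)))) by ring.
apply: ler_wpM2l; first by rewrite invr_ge0 ler0n.
apply: ler_wpM2l; first exact: ltW.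
exact: EQ.
Qed.

Lemma ln2_ge : (2^-1 : RR) <= ln (2 : RR).
Proof.
have h := @le_ln1Dx RR (- 2^-1) ltac:(lra).
have e : (1 + - 2^-1 : RR) = 2^-1 by field.
rewrite e lnV in h; first lra.
by rewrite posrE.
Qed.

Lemma ln_ge_half (y : RR) : 2 <= y -> 2^-1 <= ln y.
Proof.
move=> hy; apply: le_trans ln2_ge _.
by rewrite ler_ln // posrE; lra.
Qed.

Local Close Scope classical_set_scope.

Theorem theorem1 :
  exists C : RR, 0 < C /\
  forall (n d k : nat), (1 <= n)%N -> (1 <= d)%N -> (1 <= k)%N ->
  forall (phi : RR -> RR) (L : RR),
    (forall s t : RR, `|phi s - phi t| <= L * `|s - t|) ->
    phi 0 = 0 ->
  forall (b : RR), 0 < b ->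
  forall (x x' : 'I_n -> 'cV[RR]_d),
    (forall i, norm2 (x i) <= b) -> (forall i, norm2 (x' i) <= b) ->
  forall (a a' : RR), 0 < a -> 0 < a' ->
    rademacher (Fk phi x x' (@Jset d k a a')) <=
    C * (n%:R^-1 +
         a * a' * b ^+ 2 * L ^+ 2 / (k%:R * Num.sqrt n%:R)
         * Num.sqrt (ln (2 * d%:R * k%:R))
         * ln (2 + n%:R * b ^+ 2 * a' ^+ 2 * L ^+ 2 / k%:R)).
Proof.
exists 144; split; first lra.
move=> n d k n1 d1 k1 phi L hL h0 b b0 x x' hx hx' a a' a0 a0'.
have L0 : 0 <= L.
  have := hL 1 0; rewrite h0 subr0 subr0 normr1 mulr1 => h; exact: le_trans (normr_ge0 _) h.
apply: le_trans (rad_bound n1 k1 hL h0 L0 b0 a0 a0' hx hx') _.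
have nR : (1 : RR) <= n%:R by rewrite ler1n.
have dR : (1 : RR) <= d%:R by rewrite ler1n.
have kR : (1 : RR) <= k%:R by rewrite ler1n.
set s := Num.sqrt (n%:R : RR).
have s0 : 0 < s by rewrite sqrtr_gt0; lra.
have ns : (n%:R : RR) = s ^+ 2 by rewrite sqr_sqrtr //; lra.
set X := a * a' * b ^+ 2 * L ^+ 2 / (k%:R * s).
have X0 : 0 <= X.
  rewrite /X divr_ge0 ?mulr_ge0 ?sqr_ge0 // ?ltW //; lra.
have -> : n%:R^-1 * (k%:R^-1 * (a * (L ^+ 2 * b ^+ 2 * a' * (36 * s)))) = 36 * X.
  rewrite /X ns; field.
  by rewrite !gt_eqF //; lra.
have l1 : (2^-1 : RR) <= Num.sqrt (ln (2 * d%:R * k%:R : RR)).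
  have h : 2^-1 <= ln (2 * d%:R * k%:R : RR).
    by apply: ln_ge_half; nra.
  have hs : Num.sqrt ((2^-1 : RR) ^+ 2) <= Num.sqrt (ln (2 * d%:R * k%:R : RR)).
    by apply: ler_wsqrtr; lra.
  by rewrite sqrtr_sqr ger0_norm // ?invr_ge0 ?ler0n in hs.
have l2 : (2^-1 : RR) <= ln (2 + n%:R * b ^+ 2 * a' ^+ 2 * L ^+ 2 / k%:R : RR).
  apply: ln_ge_half.
  have : 0 <= n%:R * b ^+ 2 * a' ^+ 2 * L ^+ 2 / k%:R.
    by rewrite divr_ge0 ?mulr_ge0 ?sqr_ge0 //; lra.
  lra.
have ni : 0 <= (n%:R : RR)^-1 by rewrite invr_ge0; lra.
move: l1 l2; set u := Num.sqrt _; set v := ln _ => l1 l2.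
have uv : 4^-1 <= u * v by nra.
have : X * 4^-1 <= X * u * v by rewrite -mulrA; apply: ler_wpM2l.
lra.
Qed.
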